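(* Let $T$ be a tree on $n\ge 3$ vertices. Then $$\frac{2}{n-1}\le \gamma(T)\le \frac{n}{2n-3}.$$ Equality holds in the lower bound if and only if $T$ is isomorphic to the path $P_n$, and equality holds in the upper bound if and only if $T$ is isomorphic to the star $S_n$.
   Context: For a finite simple undirected graph $G$ with $n$ vertices, let $\mathcal{F}=\{x\in\mathbb{R}^{V(G)} : \sum_{v} x_v = 0,\ \|x\|_\infty = 1\}$, for $x\in\mathcal{F}$ let $\gamma_x(G)=\max_{uv\in E(G)}|x_u-x_v|$, and $\gamma(G)=\min_{x\in\mathcal{F}}\gamma_x(G)$. The star $S_n$ is the tree on $n$ vertices with one vertex adjacent to all other $n-1$ vertices. *)

(* Defs.v *)
From mathcomp Require Import all_boot all_order all_algebra.
From mathcomp Require Import classical_sets reals.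
Set Implicit Arguments. Unset Strict Implicit. Unset Printing Implicit Defensive.
Import Order.TTheory GRing.Theory Num.Theory.
Local Open Scope ring_scope.
Local Open Scope classical_set_scope.

(* A finite simple undirected graph is a symmetric irreflexive [e : rel T]
   on a finite vertex type [T]; the vertex set is [T], n = #|T|. *)
Definition simple_graph (T : finType) (e : rel T) : Prop :=
  symmetric e /\ irreflexive e.

Definition connected_graph (T : finType) (e : rel T) : Prop :=
  forall x y : T, connect e x y.

Definition acyclic_graph (T : finType) (e : rel T) : Prop :=
  forall c : seq T, (3 <= size c)%N -> ~ ucycle e c.

Definition is_tree (T : finType) (e : rel T) : Prop :=
  simple_graph e /\ connected_graph e /\ acyclic_graph e.

Definition path_rel (n : nat) : rel 'I_n :=
  fun i j => (i.+1 == j :> nat) || (j.+1 == i :> nat).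

Definition star_rel (n : nat) : rel 'I_n :=
  fun i j => (val i == 0%N) != (val j == 0%N).

Definition graph_iso (T U : finType) (e : rel T) (f : rel U) : Prop :=
  exists g : T -> U, bijective g /\ forall x y : T, f (g x) (g y) = e x y.

Definition supnorm (R : realType) (T : finType) (x : T -> R) : R :=
  \big[Num.max/0]_(v : T) `|x v|.

Definition feasible (R : realType) (T : finType) (x : T -> R) : Prop :=
  \sum_(v : T) x v = 0 /\ supnorm x = 1.

Definition gamma_x (R : realType) (T : finType) (e : rel T) (x : T -> R) : R :=
  \big[Num.max/0]_(p : T * T | e p.1 p.2) `|x p.1 - x p.2|.

(* gamma(G) = min_{x in F} gamma_x(G), taken as the infimum (the minimum
   is attained by compactness, so both agree). *)
Definition gamma (R : realType) (T : finType) (e : rel T) : R :=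
  inf [set gamma_x e x | x in [set x : T -> R | feasible x]].

Arguments path_rel n : clear implicits.
Arguments star_rel n : clear implicits.

(* Main.v *)
Require Import Defs.
From mathcomp Require Import all_boot all_order all_algebra.
From mathcomp Require Import classical_sets reals.
From mathcomp Require Import ring lra zify.

Set Implicit Arguments. Unset Strict Implicit. Unset Printing Implicit Defensive.
Import Order.TTheory GRing.Theory Num.Theory.
Local Open Scope ring_scope.

Section Basics.
Variables (R : realType) (T : finType) (e : rel T).

Lemma gamma_x_ge0 (x : T -> R) : 0 <= gamma_x e x.
Proof. exact: bigmax_ge_id. Qed.

Lemma gamma_x_edge (x : T -> R) a b : e a b -> `|x a - x b| <= gamma_x e x.
Proof. by move=> eab; rewrite /gamma_x; apply: (@le_bigmax_cond _ _ _ 0 (a, b) (fun p : T * T => e p.1 p.2) (fun p : T * T => `|x p.1 - x p.2|)). Qed.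

Lemma gamma_x_le (x : T -> R) g : 0 <= g ->
  (forall a b, e a b -> `|x a - x b| <= g) -> gamma_x e x <= g.
Proof. by move=> g0 H; apply: bigmax_le => // -[a b] /= /H. Qed.

Lemma supnorm_attained (x : T -> R) (v0 : T) : exists v, supnorm x = `|x v|.
Proof.
have [i0 _ H] := @eq_bigmax _ _ T 0 v0 predT (fun v => `|x v|) isT (fun _ _ => normr_ge0 _).
by exists i0; exact: H.
Qed.

Lemma supnorm_le (x : T -> R) : (forall v, `|x v| <= 1) -> supnorm x <= 1.
Proof. by move=> H; apply: bigmax_le. Qed.

Lemma supnorm_ge (x : T -> R) v : `|x v| <= supnorm x.
Proof. exact: (@le_bigmax _ _ _ 0 (fun v => `|x v|)). Qed.

End Basics.

Section Gam.
Variables (R : realType) (T : finType) (e : rel T).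
Local Open Scope classical_set_scope.

Lemma gamma_le (x : T -> R) : feasible x -> gamma R e <= gamma_x e x.
Proof.
move=> fx; rewrite /gamma.
have hl : has_lbound [set gamma_x e x | x in [set x : T -> R | feasible x]].
  by exists 0 => _ [y _ <-]; exact: gamma_x_ge0.
by apply: (ge_inf hl); exists x.
Qed.

Lemma gamma_ge (x0 : T -> R) (c : R) : feasible x0 ->
  (forall x : T -> R, feasible x -> c <= gamma_x e x) -> c <= gamma R e.
Proof.
move=> f0 H; apply: lb_le_inf; first by exists (gamma_x e x0), x0.
by move=> _ [y fy <-]; exact: H.
Qed.
End Gam.

Section Level.
Variables (R : realType) (T : finType) (e : rel T).

Lemma level_feasible (c : T -> nat) (u : T) (g : R) :
  0 <= g -> c u = 0%N -> (forall v, (c v)%:R * g <= 2) ->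
  (forall a b, e a b -> (c a <= (c b).+1)%N /\ (c b <= (c a).+1)%N) ->
  #|T|%:R = g * (\sum_v (c v)%:R) ->
  feasible (fun v => 1 - (c v)%:R * g) /\ gamma_x e (fun v => 1 - (c v)%:R * g) <= g.
Proof.
move=> g0 cu c2 ce hs; split; first split.
- rewrite big_split /= sumr_const sumrN -mulr_suml (mulrC _ g) -hs.
  exact: subrr.
- apply/le_anti/andP; split.
    apply: supnorm_le => v; have := c2 v.
    have : 0 <= (c v)%:R * g by rewrite mulr_ge0.
    move=> h1 h2; rewrite ler_norml; apply/andP; split; lra.
  by apply: le_trans (supnorm_ge _ u); rewrite cu mul0r subr0 normr1.
- apply: gamma_x_le => // a b /ce [h1 h2].
  have : (c a)%:R <= (c b)%:R + 1 :> R by rewrite natr1 ler_nat.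
  have : (c b)%:R <= (c a)%:R + 1 :> R by rewrite natr1 ler_nat.
  move=> k1 k2.
  have -> : 1 - (c a)%:R * g - (1 - (c b)%:R * g) = ((c b)%:R - (c a)%:R) * g by ring.
  rewrite normrM (ger0_norm g0) -[X in _ <= X]mul1r ler_wpM2r //.
  rewrite ler_norml; apply/andP; split; lra.
Qed.
End Level.

From Stdlib Require Import Classical.

Section Graph.
Variables (T : finType) (e : rel T).
Hypothesis esym : symmetric e.
Hypothesis eirr : irreflexive e.

Definition upath (a : T) (p : seq T) := path e a p && uniq (a :: p).

Lemma crossing (S : {pred T}) a b : connect e a b -> a \in S -> b \notin S ->
  exists s w, [/\ s \in S, w \notin S & e s w].
Proof.
move=> /connectP [p]; elim: p a => [|y p IH] a /=; first by move=> _ -> ->.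
case/andP=> eay pp lb aS bS.
case: (boolP (y \in S)) => yS; first exact: IH yS bS.
by exists a, y.
Qed.

Lemma upath_size a p : upath a p -> (size p < #|T|)%N.
Proof.
case/andP=> _ u; have := card_uniqP u => /= h.
by have := max_card (mem (a :: p)); rewrite h.
Qed.

Lemma exists_max a p : upath a p -> exists b q, upath b q /\
  forall c r, upath c r -> (size r <= size q)%N.
Proof.
move=> up; move: {2}(#|T| - size p)%N (leqnn (#|T| - size p)%N) => k.
elim: k a p up => [|k IH] a p up hk.
  exists a, p; split => // c r /upath_size; have := upath_size up; lia.
case: (classic (exists c r, upath c r /\ (size p < size r)%N)).
  move=> [c [r [ucr lt]]]; apply: (IH c r ucr); have := upath_size ucr; lia.
move=> H; exists a, p; split => // c r ucr.
by case: (leqP (size r) (size p)) => // lt; case: H; exists c, r.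
Qed.
End Graph.

Section Tree.
Variables (T : finType) (e : rel T).
Hypothesis esym : symmetric e.
Hypothesis eirr : irreflexive e.
Hypothesis eacy : acyclic_graph e.

Lemma no_back a p i : upath e a p -> (0 < i < size p)%N -> ~~ e a (nth a p i).
Proof.
case/andP=> pp up /andP [i0 ip]; apply/negP => ea.
have := eacy (c := a :: take i.+1 p).
rewrite /= size_takel // => /(_ ltac:(lia)); apply.
apply/andP; split.
  rewrite /cycle rcons_path take_path //=.
  by rewrite (take_nth a ip) last_rcons esym.
case/andP: up => ap up /=; rewrite take_uniq // andbT.
by apply: contra ap; apply: mem_take.
Qed.

Lemma leaf a p w : upath e a p ->
  (forall c r, upath e c r -> (size r <= size p)%N) ->
  e a w -> exists q, p = w :: q.
Proof.
move=> up M eaw.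
case: (boolP (w \in a :: p)) => wp; last first.
  have : upath e w (a :: p).
    case/andP: up => pp uu; apply/andP; split; first by rewrite /= esym eaw.
    by rewrite cons_uniq wp uu.
  by move/M => /=; rewrite ltnn.
rewrite inE in wp; case/orP: wp => [/eqP wa|wp].
  by rewrite wa eirr in eaw.
have ip := (index_mem w p); rewrite wp in ip.
case: (posnP (index w p)) => i0.
  case: p up M wp ip i0 => [//|b q] up M wp ip /=.
  by case: eqP => // -> _; exists q.
have := no_back up (i := index w p); rewrite i0 ip nth_index //.
by rewrite eaw => /(_ isT).
Qed.

Hypothesis econ : connected_graph e.

Lemma outside (s : seq T) : (size s < #|T|)%N -> exists v, v \notin s.
Proof.
move=> lt; case: (classic (exists v, v \notin s)) => // H; exfalso.
have : (#|T| <= #|s|)%N.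
  apply: subset_leq_card.

 apply/fintype.subsetP => v _.
  by case: (boolP (v \in s)) => // nv; case: H; exists v.
have := card_size s; lia.
Qed.

Lemma triangle_free b x y : e b x -> e b y -> ~~ e x y.
Proof.
move=> ebx eby; apply/negP => exy.
have bx : b != x by apply: contraTneq ebx => ->; rewrite eirr.
have bY : b != y by apply: contraTneq eby => ->; rewrite eirr.
have xy : x != y by apply: contraTneq exy => ->; rewrite eirr.
apply: (eacy (c := [:: b; x; y])) => //.
by rewrite /ucycle /= ebx exy esym eby /= !inE negb_or bx bY xy.
Qed.

Lemma star_center a p : upath e a p ->
  (forall c r, upath e c r -> (size r <= size p)%N) ->
  (3 <= #|T|)%N -> (size p <= 2)%N ->
  exists b, forall v, v != b -> e b v.
Proof.
move=> up M n3 sp.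
case: p up M sp => [|b [|d [|? ?]]] up M sp //.
- (* size 0: impossible since there is an edge *)
  have [v va] := outside (s := [:: a]) (leq_trans (isT : (1 < 3)%N) n3).
  have [s [w [sS wS esw]]] := crossing (S := mem [:: a]) (econ a v) (mem_head _ _) va.
  rewrite inE in sS; move/eqP: sS => sa; subst s.
  rewrite inE in wS.
  have : upath e a [:: w] by rewrite /upath /= esw /= inE andbT eq_sym.
  by move/M.
- have [v va] := outside (s := [:: a; b]) n3.
  have [s [w [sS wS esw]]] := crossing (S := mem [:: a; b]) (econ a v) (mem_head _ _) va.
  case/andP: up => /= /andP [eab _]; rewrite !inE andbT => ab.
  rewrite !inE negb_or in wS; case/andP: wS => wa wb.
  rewrite !inE in sS; case/orP: sS => /eqP ->> in esw.
  + have : upath e w [:: a; b].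
      by rewrite /upath /= esym esw eab /= !inE negb_or wa wb ab.
    by move/M.
  + have : upath e a [:: b; w].
      rewrite /upath /= eab esw /= !inE negb_or ab andbT /=.
      by rewrite eq_sym wa /= eq_sym wb.
    by move/M.
- exists b => v vb; apply: contraT => nbv.
  have [s [w [sS wS esw]]] := crossing (S := [pred z | (z == b) || e b z]) (econ b v)
    ltac:(by rewrite inE eqxx) ltac:(by rewrite inE negb_or vb).
  rewrite !inE negb_or in sS wS; case/andP: wS => wb nbw.
  have sb : s != b by apply: contraNneq nbw => sb; rewrite -sb.
  move: sS; rewrite (negbTE sb) /= => ebs.
  case/andP: up => /= /andP [eab /andP [ebd _]].
  rewrite !inE !negb_or andbT.
  case/andP=> /andP [ab ad] bd.
  have [a' [eba a's]] : exists a', e b a' /\ a' != s.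
    case: (eqVneq s a) => [sa|sa]; first by exists d; rewrite ebd sa eq_sym ad.
    by exists a; rewrite esym eab eq_sym sa.
  have : upath e a' [:: b; s; w].
    rewrite /upath /= esym eba ebs esw /= !inE !negb_or.
    rewrite (eq_sym b s) sb (eq_sym b w) wb a's.
    have -> : s != w by apply: contraNneq nbw => <-.
    have -> : a' != w by apply: contraNneq nbw => <-.
    by have -> : a' != b by apply: contraTneq eba => ->; rewrite eirr.
  by move/M.
Qed.
End Tree.

Lemma sum_ind (R : realType) (T : finType) (a : T) : \sum_(v : T) ((v == a)%:R : R) = 1.
Proof. by rewrite (bigD1 a) //= eqxx big1 ?addr0 // => v /negbTE ->. Qed.

Section Upper.
Variables (R : realType) (T : finType) (e : rel T).
Hypothesis esym : symmetric e.
Hypothesis eirr : irreflexive e.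
Hypothesis eacy : acyclic_graph e.
Hypothesis econ : connected_graph e.
Hypothesis n3 : (3 <= #|T|)%N.

Lemma max_path : exists a b q, upath e a (b :: q) /\
  forall c r, upath e c r -> (size r <= size (b :: q))%N.
Proof.
have [v _] := outside (s := [::]) (leq_trans (isT : (0 < 3)%N) n3).
have [w wv] := outside (s := [:: v]) (leq_trans (isT : (1 < 3)%N) n3).
have [s [w' [sS wS esw]]] := crossing (S := mem [:: v]) (econ v w) (mem_head _ _) wv.
rewrite !inE in sS wS; move/eqP: sS => ?; subst s.
have uvw : upath e v [:: w'] by rewrite /upath /= esw /= inE andbT eq_sym.
have [a [p [up M]]] := exists_max uvw.
case: p up M => [|b q] up M; first by have := M _ _ uvw.
by exists a, b, q.
Qed.


Lemma upper_gen : exists x : T -> R, feasible x /\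
  gamma_x e x <= #|T|%:R / (2 * #|T| - 3)%:R.
Proof.
have [a [b [q [up M]]]] := max_path.
have lf : forall w, e a w -> w = b.
  by move=> w eaw; have [q' [-> _]] := leaf esym eirr eacy up M eaw.
have ab : a != b by case/andP: up => _; rewrite /= inE negb_or => /andP [/andP []].
pose c := fun v : T => if v == a then 0%N else if v == b then 1%N else 2%N.
have cR : forall v, (c v)%:R = 2 - 2 * (v == a)%:R - (v == b)%:R :> R.
  move=> v; rewrite /c; case: (eqVneq v a) => [->|va]; first by rewrite (negbTE ab) /=; ring.
  by case: (eqVneq v b) => _ /=; ring.
have nR : (3 <= #|T|%:R :> R) by rewrite (ler_nat R 3).
have -> : (2 * #|T| - 3)%:R = 2 * #|T|%:R - 3 :> R.
  by rewrite natrB ?natrM //; lia.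
set N := #|T|%:R : R in nR *.
set g := N / (2 * N - 3).
have hg : 2 * N - 3 != 0 by apply/eqP => h; lra.
have g0 : 0 <= g by rewrite /g divr_ge0 //; lra.
have g1 : g <= 1 by rewrite /g ler_pdivrMr; lra.
have := @level_feasible R T e c a g g0 ltac:(by rewrite /c eqxx).
case.
- move=> v; rewrite cR; case: (v == a); case: (v == b) => /=; lra.
- move=> x y exy; rewrite /c.
  case: (eqVneq x a) => [xa|xa].
    subst x; have ba : b != a by rewrite eq_sym.
    by rewrite (lf _ exy) eqxx (negbTE ba).
  case: (eqVneq y a) => [ya|ya].
    subst y; rewrite esym in exy; by rewrite (lf _ exy) eqxx.
  by case: (x == b); case: (y == b).
- rewrite (eq_bigr _ (fun v _ => cR v)) big_split /= big_split /= sumr_const.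
  rewrite !sumrN -mulr_sumr !sum_ind -mulr_natr.
  change (#|xpredT|%:R) with N; change (#|T|%:R) with N.
  rewrite /g; field => //.
by move=> fx gx; exists (fun v => 1 - (c v)%:R * g).
Qed.

Lemma upper_strict a b d f q : upath e a [:: b, d, f & q] ->
  (forall c r, upath e c r -> (size r <= size [:: b, d, f & q])%N) ->
  exists x : T -> R, feasible x /\
  gamma_x e x < #|T|%:R / (2 * #|T| - 3)%:R.
Proof.
move=> up M.
have lf : forall w, e a w -> w = b.
  by move=> w eaw; have [q' [-> _]] := leaf esym eirr eacy up M eaw.
have n4 := upath_size up.
have ubp : upath e b [:: d, f & q].
  by case/andP: up => /andP [_ pp] /andP [_ uu]; apply/andP.
have nbf : ~~ e b f by have := no_back esym eacy (i := 1) ubp; apply.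
case/andP: up => _; rewrite /= !inE !negb_or.
move=> /andP [/and4P [ab ad af _] /andP [/and3P [bd bf _] _]].
have ba : b != a by rewrite eq_sym.
have fa : f != a by rewrite eq_sym.
have fb : f != b by rewrite eq_sym.
pose c := fun v : T => if v == a then 0%N else if v == b then 1%N else if v == f then 3%N else 2%N.
have cR : forall v, (c v)%:R = 2 - 2 * (v == a)%:R - (v == b)%:R + (v == f)%:R :> R.
  move=> v; rewrite /c; case: (eqVneq v a) => [->|va].
    by rewrite (negbTE ab) (negbTE af) /=; ring.
  case: (eqVneq v b) => [vb|vb]; first by rewrite vb (negbTE bf) /=; ring.
  by case: (eqVneq v f) => _ /=; ring.
have nR : (4 <= #|T|%:R :> R) by rewrite (ler_nat R 4); move: n4 => /=; lia.
have -> : (2 * #|T| - 3)%:R = 2 * #|T|%:R - 3 :> R.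
  by rewrite natrB ?natrM //; lia.
set N := #|T|%:R : R in nR *.
set g := N / (2 * N - 2).
have hg : 2 * N - 2 != 0 by apply/eqP => h; lra.
have g0 : 0 <= g by rewrite /g divr_ge0 //; lra.
have g1 : 3 * g <= 2 by rewrite /g mulrA ler_pdivrMr; lra.
have := @level_feasible R T e c a g g0 ltac:(by rewrite /c eqxx).
case.
- move=> v; rewrite /c; case: (v == a) => /=; first lra.
  case: (v == b) => /=; first lra.
  case: (v == f) => /=; lra.
- move=> x y exy; rewrite /c.
  case: (eqVneq x a) => [xa|xa].
    by subst x; rewrite (lf _ exy) eqxx (negbTE ba).
  case: (eqVneq y a) => [ya|ya].
    by subst y; rewrite esym in exy; rewrite (lf _ exy) eqxx.
  case: (eqVneq x b) => [xb|xb].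
    subst x; case: (eqVneq y b) => // yb; case: (eqVneq y f) => // yf.
    by subst y; rewrite exy in nbf.
  case: (eqVneq y b) => [yb|yb]; last by case: (x == f); case: (y == f).
  subst y; case: (eqVneq x f) => // xf.
  by subst x; rewrite esym exy in nbf.
- rewrite (eq_bigr _ (fun v _ => cR v)) !big_split /= sumr_const.
  rewrite !sumrN -mulr_sumr !sum_ind -mulr_natr.
  change (#|xpredT|%:R) with N; change (#|T|%:R) with N.
  rewrite /g; field => //.
move=> fx gx; exists (fun v => 1 - (c v)%:R * g); split => //.
apply: (le_lt_trans gx); rewrite -subr_gt0.
have h3 : 2 * N - 3 != 0 by apply/eqP => h; lra.
have -> : N / (2 * N - 3) - g = N / ((2 * N - 3) * (2 * N - 2)) by rewrite /g; field; rewrite h3 hg.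
by rewrite divr_gt0 ?mulr_gt0 //; lra.
Qed.
End Upper.

Section Lower.
Variables (R : realType) (T : finType) (e : rel T).
Hypothesis eirr : irreflexive e.
Hypothesis econ : connected_graph e.
Variables (y : T -> R) (p : T) (g : R).
Hypothesis yp : y p = 1.
Hypothesis g0 : 0 <= g.
Hypothesis hy : forall a b, e a b -> y a - g <= y b.

Definition tri (k : nat) : R := (k%:R * (k%:R - 1)) / 2.

Definition PInv (S : {set T}) (k : nat) :=
  exists s : seq T, [/\ S = [set v in s], uniq s, size s = k,
    (forall i, (i < k)%N -> 1 - i%:R * g <= y (nth p s i)) &
    (forall i j, (i < k)%N -> (j < k)%N ->
       e (nth p s i) (nth p s j) = (i.+1 == j) || (j.+1 == i))].

Definition Inv (k : nat) := exists S : {set T}, [/\ #|S| = k,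
  (forall v, v \in S -> 1 - (k%:R - 1) * g <= y v),
  k%:R - g * tri k <= \sum_(v in S) y v &
  (k%:R - g * (tri k - 1) <= \sum_(v in S) y v) \/ PInv S k].

Lemma inv1 : Inv 1.
Proof.
exists [set p]; split.
- exact: cards1.
- by move=> v; rewrite inE => /eqP ->; rewrite yp subrr mul0r subr0.
- by rewrite big_set1 yp /tri subrr mulr0 mul0r mulr0 subr0.
right; exists [:: p]; split => //.
- by apply/setP => v; rewrite !inE.
- by case=> // _; rewrite yp mul0r subr0.
- by case=> [|//] [|//] _ _ /=; rewrite eirr.
Qed.


Hypothesis esym : symmetric e.

Lemma triS k : tri k.+1 = tri k + k%:R.
Proof. by rewrite /tri -natr1; field. Qed.

Lemma inv_step k : (0 < k)%N -> (k < #|T|)%N -> Inv k -> Inv k.+1.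
Proof.
move=> k0 kn [S [cS hA hB hC]].
have [w0 w0S] : exists w, w \notin S.
  case: (classic (exists w, w \notin S)) => // H; exfalso.
  have ST : S = [set: T]%SET by apply/setP => v; rewrite inE; apply: contraT => nv; case: H; exists v.
  by move: cS; rewrite ST cardsT; lia.
have [a0 a0S] : exists a, a \in S by apply/set0Pn; rewrite -card_gt0 cS.
have [a [w [aS wS eaw]]] := crossing (econ a0 w0) a0S w0S.
have kR : k.+1%:R = k%:R + 1 :> R by rewrite -natr1.
have ext : forall w', w' \notin S -> 1 - k%:R * g <= y w' ->
    exists S', [/\ S' = w' |: S, #|S'| = k.+1,
      (forall v, v \in S' -> 1 - (k.+1%:R - 1) * g <= y v),
      k.+1%:R - g * tri k.+1 <= \sum_(v in S') y v &
      \sum_(v in S') y v = y w' + \sum_(v in S) y v].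
  move=> w' w'S yw'; exists (w' |: S); split => //.
  - by rewrite cardsU1 w'S cS.
  - move=> v; rewrite in_setU1 => /orP [/eqP -> |vS]; first by rewrite kR addrK.
    have := hA v vS; rewrite kR addrK mulrBl mul1r => h.
    move: h; set kg := k%:R * g => h.
    apply: le_trans h; rewrite lerD2l lerN2 gerBl //.
  - by rewrite big_setU1 //= triS kR; lra.
  - by rewrite big_setU1.
case: hC => [hG|[s [Ss us ss hs he]]].
  have yw : 1 - k%:R * g <= y w.
    by have := hA a aS; have := hy eaw; lra.
  have [S' [-> c' A' B' sE]] := ext w wS yw.
  exists (w |: S); split => //; left.
  by rewrite sE triS kR; lra.
case: (classic (exists i w', [/\ (i.+1 < k)%N, w' \notin S & e (nth p s i) w'])).
  move=> [i [w' [ik w'S ew']]].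
  have yw : 1 - k%:R * g <= y w'.
    have := hs i (ltnW ik); have := hy ew'.
    have : (i%:R + 1) * g <= k%:R * g :> R.
      by rewrite ler_wpM2r // natr1 ler_nat ltnW.
    rewrite mulrDl mul1r => *; lra.
  have [S' [-> c' A' B' sE]] := ext w' w'S yw.
  exists (w' |: S); split => //; left.
  rewrite sE triS kR.
  have : (i%:R + 1) * g <= (k%:R - 1) * g :> R.
    by rewrite ler_wpM2r // lerBrDr !natr1 ler_nat.
  have := hs i (ltnW ik); have := hy ew'.
  rewrite mulrDl mulrBl !mul1r => *; lra.
move=> nG.
have as_ : a \in s by rewrite Ss inE in aS.
have ia : index a s = k.-1.
  have := index_mem a s; rewrite as_ ss => ik.
  case: (ltnP (index a s).+1 k) => [lt|]; last by lia.
  by case: nG; exists (index a s), w; rewrite nth_index.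
have yw : 1 - k%:R * g <= y w by have := hA a aS; have := hy eaw; lra.
have [S' [-> c' A' B' sE]] := ext w wS yw.
exists (w |: S); split => //; right.
have ws : w \notin s by rewrite Ss inE in wS.
exists (rcons s w); split.
- by apply/setP => v; rewrite Ss !inE mem_rcons inE.
- by rewrite rcons_uniq ws us.
- by rewrite size_rcons ss.
- move=> i ik; rewrite nth_rcons ss.
  case: (ltnP i k) => [lt|ge]; first exact: hs.
  have -> : i = k by lia.
  by rewrite eqxx; lra.
have ewj : forall j, (j < k)%N -> e (nth p s j) w = (j.+1 == k).
  move=> j jk; case: (eqVneq j.+1 k) => [jk1|jk1].
    have -> : j = index a s by rewrite ia -jk1.
    by rewrite nth_index // eaw.
  apply/negbTE/negP => ejw; case: nG; exists j, w; split => //.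
  by rewrite ltn_neqAle jk1.
move=> i j ik jk; rewrite !nth_rcons ss.
case: (ltnP i k) => [ilt|ige]; case: (ltnP j k) => [jlt|jge].
- exact: he.
- have ej : j = k by apply/eqP; rewrite eqn_leq jge -ltnS jk.
  subst j; rewrite eqxx ewj //; case: (i.+1 == k) => //=.
  by symmetry; apply/negbTE; rewrite neq_ltn ltnS (ltnW ilt) orbT.
- have ei : i = k by apply/eqP; rewrite eqn_leq ige -ltnS ik.
  subst i; rewrite eqxx esym ewj // orbC; case: (j.+1 == k) => //=.
  by symmetry; apply/negbTE; rewrite neq_ltn ltnS (ltnW jlt) orbT.
- have ei : i = k by apply/eqP; rewrite eqn_leq ige -ltnS ik.
  have ej : j = k by apply/eqP; rewrite eqn_leq jge -ltnS jk.
  subst i j; rewrite eqxx eirr; symmetry; apply/negbTE; rewrite orbb.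
  by rewrite eqn_leq ltnn.
Qed.


Lemma inv_all k : (0 < k)%N -> (k <= #|T|)%N -> Inv k.
Proof.
elim: k => [//|[|k] IH] _ kn; first exact: inv1.
apply: inv_step => //; apply: IH => //; exact: ltnW.
Qed.

Lemma lower_main : (0 < #|T|)%N -> \sum_v y v = 0 ->
  (#|T|%:R - g * tri #|T| <= 0) /\
  ((#|T|%:R - g * (tri #|T| - 1) <= 0) \/
   exists s : seq T, [/\ uniq s, size s = #|T| &
    (forall i j, (i < #|T|)%N -> (j < #|T|)%N ->
       e (nth p s i) (nth p s j) = (i.+1 == j) || (j.+1 == i))]).
Proof.
move=> n0 sy; have [S [cS _ hB hC]] := inv_all n0 (leqnn _).
have ST : S = [set: T]%SET.
  by apply/eqP; rewrite eqEcard finset.subsetT cardsT cS /=.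
have sS : \sum_(v in S) y v = 0.
  by rewrite ST -[RHS]sy; apply: eq_bigl => v; rewrite inE.
rewrite sS in hB hC; split => //.
case: hC => [h|[s [_ us ss _ he]]]; [by left | right].
by exists s.
Qed.
End Lower.

Section Norm.
Variables (R : realType) (T : finType).

Lemma normalize (x : T -> R) (v0 : T) : feasible x -> exists (y : T -> R) p,
  [/\ y p = 1, \sum_v y v = 0 & forall a b, `|y a - y b| = `|x a - x b|].
Proof.
case=> sx nx; have [p hp] := supnorm_attained x v0.
rewrite nx in hp.
pose s := x p; exists (fun v => s * x v), p; split.
- by rewrite /s -expr2 -real_normK ?num_real // -hp expr1n.
- by rewrite -mulr_sumr sx mulr0.
- by move=> a b; rewrite -mulrBr normrM -hp mul1r.
Qed.
End Norm.

From mathcomp Require Import fingroup perm.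

Section Iso.
Variables (T : finType) (e : rel T).

Lemma iso_path (p : T) (s : seq T) : uniq s -> size s = #|T| ->
  (forall i j, (i < #|T|)%N -> (j < #|T|)%N ->
       e (nth p s i) (nth p s j) = (i.+1 == j) || (j.+1 == i)) ->
  graph_iso e (path_rel #|T|).
Proof.
move=> us ss he.
have ms : forall v, v \in s.
  move=> v; apply: contraT => vs.
  have : uniq (v :: s) by rewrite /= vs us.
  move/card_uniqP => /= h; have := max_card (mem (v :: s)); rewrite h ss; lia.
have il : forall v, (index v s < #|T|)%N by move=> v; rewrite -ss index_mem.
pose g := fun v => Ordinal (il v).
exists g; split.
  exists (fun i : 'I_#|T| => nth p s i).
    by move=> v; rewrite /g /= nth_index.
  by move=> i; apply: val_inj; rewrite /= index_uniq // ss.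
move=> x y; rewrite /path_rel /g /= -he // !nth_index //.
Qed.

Lemma iso_star (b : T) : (forall x y, e x y = ((x == b) != (y == b))) ->
  graph_iso e (star_rel #|T|).
Proof.
move=> he.
have n0 : (0 < #|T|)%N by apply/card_gt0P; exists b.
pose i0 : 'I_#|T| := Ordinal n0.
pose t := tperm (enum_rank b) i0.
pose g := fun v => t (enum_rank v).
have gK : cancel g (fun i => enum_val (t i)) by move=> v; rewrite /g tpermK enum_rankK.
have hK : cancel (fun i => enum_val (t i)) g by move=> i; rewrite /g enum_valK tpermK.
have gb : g b = i0 by rewrite /g tpermL.
have gv : forall v, (val (g v) == 0%N) = (v == b).
  move=> v; rewrite -[0%N]/(val i0) val_eqE -gb.
  exact: (inj_eq (can_inj gK)).
exists g; split; first by exists (fun i => enum_val (t i)).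
by move=> x y; rewrite /star_rel !gv he.
Qed.
End Iso.

Section PathStar.
Variables (R : realType) (T : finType) (e : rel T).

Lemma sum_ord_tri n : \sum_(i < n) (i : nat)%:R = tri R n.
Proof.
elim: n => [|n IH]; first by rewrite big_ord0 /tri mul0r mul0r.
by rewrite big_ord_recr /= IH triS.
Qed.

Lemma path_upper : (2 <= #|T|)%N -> graph_iso e (path_rel #|T|) ->
  exists x : T -> R, feasible x /\ gamma_x e x <= 2 / (#|T|.-1)%:R.
Proof.
move=> n2 [g [[h gK hK] he]].
have n0 : (0 < #|T|)%N by lia.
pose u := h (Ordinal n0).
have nR : (2 <= #|T|%:R :> R) by rewrite (ler_nat R 2).
have -> : (#|T|.-1)%:R = #|T|%:R - 1 :> R by rewrite -subn1 natrB.
set N := #|T|%:R : R in nR *.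
set gm := 2 / (N - 1).
have hg : N - 1 != 0 by apply/eqP => h1; lra.
have g0 : 0 <= gm by rewrite /gm divr_ge0 //; lra.
have := @level_feasible R T e (fun v => nat_of_ord (g v)) u gm g0 ltac:(by rewrite /u hK).
case.
- move=> v; have : (nat_of_ord (g v) <= #|T|.-1)%N by rewrite -ltnS prednK //; exact: ltn_ord.
  rewrite -(ler_nat R) => hv.
  have e1 : (#|T|.-1)%:R = N - 1 :> R by rewrite -subn1 natrB.
  rewrite e1 in hv.
  rewrite /gm mulrA ler_pdivrMr; lra.
- move=> a b; rewrite -he => /orP [] /eqnP h1 /=;
    move: h1; set i := nat_of_ord (g a); set j := nat_of_ord (g b) => h1; lia.
- rewrite (reindex h); last by exists g => i _; [rewrite hK|rewrite gK].
  under eq_bigr do rewrite hK.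
  rewrite sum_ord_tri /tri /gm -/N; field => //.
by move=> fx gx; exists (fun v => 1 - (nat_of_ord (g v))%:R * gm).
Qed.

Lemma star_center_of_iso : (0 < #|T|)%N -> graph_iso e (star_rel #|T|) ->
  exists b, forall x y, e x y = ((x == b) != (y == b)).
Proof.
move=> n0 [g [[h gK hK] he]].
pose i0 : 'I_#|T| := Ordinal n0.
exists (h i0) => x y; rewrite -he /star_rel.
have gv : forall v, (nat_of_ord (g v) == 0%N) = (v == h i0).
  move=> v; rewrite -[0%N]/(nat_of_ord i0).
  have -> : (nat_of_ord (g v) == nat_of_ord i0) = (g v == i0) by [].
  by rewrite -{1}(hK i0) (inj_eq (can_inj gK)).
by rewrite !gv.
Qed.

Lemma star_lower : (3 <= #|T|)%N -> graph_iso e (star_rel #|T|) ->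
  forall x : T -> R, feasible x -> #|T|%:R / (2 * #|T| - 3)%:R <= gamma_x e x.
Proof.
move=> n3 iso x fx.
have n0 : (0 < #|T|)%N by lia.
have [b hb] := star_center_of_iso n0 iso.
have [y [p [yp sy hyx]]] := normalize b fx.
set gm := gamma_x e x.
have hy : forall a c, e a c -> y a - gm <= y c.
  move=> a c eac; have := gamma_x_edge x eac; rewrite -hyx -/gm.
  by rewrite ler_norml => /andP [h1 h2]; lra.
have g0 : 0 <= gm by exact: gamma_x_ge0.
have nR : (3 <= #|T|%:R :> R) by rewrite (ler_nat R 3).
have -> : (2 * #|T| - 3)%:R = 2 * #|T|%:R - 3 :> R.
  by rewrite natrB ?natrM //; lia.
set N := #|T|%:R : R in nR *.
have key : N - (2 * N - 3) * gm <= 0.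
  case: (eqVneq p b) => [pb|pb].
  - subst p.
    have : \sum_v (1 - gm + gm * (v == b)%:R) <= \sum_v y v.
      apply: ler_sum => v _; case: (eqVneq v b) => [->|vb] /=.
        by rewrite yp mulr1; lra.
      have := hy b v; rewrite hb eqxx (negbTE vb) => /(_ isT); rewrite yp mulr0; lra.
    rewrite sy big_split /= sumr_const -mulr_sumr sum_ind -mulr_natr.
    change (#|xpredT|%:R) with N => h.
    have : 0 <= (N - 2) * gm by rewrite mulr_ge0 //; lra.
    lra.
  - have : \sum_v (1 - 2 * gm + 2 * gm * (v == p)%:R + gm * (v == b)%:R) <= \sum_v y v.
      apply: ler_sum => v _; case: (eqVneq v p) => [->|vp] /=.
        by rewrite yp (negbTE pb) /= mulr0 mulr1; lra.
      have ybg : 1 - gm <= y b by have := hy p b; rewrite hb eqxx (negbTE pb) => /(_ isT); rewrite yp.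
      case: (eqVneq v b) => [->|vb] /=; first by rewrite mulr1 mulr0; lra.
      have := hy b v; rewrite hb eqxx (negbTE vb) => /(_ isT); rewrite !mulr0; lra.
    rewrite sy !big_split /= !sumr_const -!mulr_sumr !sum_ind.
    rewrite -[_ *+ #|xpredT|]mulr_natr -[_ *+ #|xpredT|]mulr_natr.
    change (#|xpredT|%:R) with N => h; lra.
have hpos : 0 < 2 * N - 3 by lra.
by rewrite ler_pdivrMr //; lra.
Qed.
End PathStar.

Section Main.
Variables (R : realType) (T : finType) (e : rel T).
Hypothesis esym : symmetric e.
Hypothesis eirr : irreflexive e.
Hypothesis eacy : acyclic_graph e.
Hypothesis econ : connected_graph e.
Hypothesis n3 : (3 <= #|T|)%N.

Lemma lower_tree (x : T -> R) : feasible x ->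
  2 / (#|T|.-1)%:R <= gamma_x e x /\
  (graph_iso e (path_rel #|T|) \/ #|T|%:R / (tri R #|T| - 1) <= gamma_x e x).
Proof.
move=> fx.
have [v0 _] := outside (s := [::]) (leq_trans (isT : (0 < 3)%N) n3).
have [y [p [yp sy hyx]]] := normalize v0 fx.
set gm := gamma_x e x.
have hy : forall a c, e a c -> y a - gm <= y c.
  move=> a c eac; have := gamma_x_edge x eac; rewrite -hyx -/gm.
  by rewrite ler_norml => /andP [h1 h2]; lra.
have g0 : 0 <= gm by exact: gamma_x_ge0.
have [hA hB] := lower_main eirr econ yp g0 hy esym (leq_trans (isT : (0 < 3)%N) n3) sy.
have nR : (3 <= #|T|%:R :> R) by rewrite (ler_nat R 3).
have -> : (#|T|.-1)%:R = #|T|%:R - 1 :> R by rewrite -subn1 natrB //; lia.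
move: hA hB; rewrite /tri.
set N := #|T|%:R : R in nR *.
move=> hA hB; split.
  rewrite ler_pdivrMr; last lra.
  apply: contraLR hA; rewrite -!ltNge => h.
  have : 0 < N * (2 - gm * (N - 1)) by rewrite mulr_gt0 //; lra.
  have -> : N - gm * (N * (N - 1) / 2) = N * (2 - gm * (N - 1)) / 2 by field.
  by move=> hp; rewrite divr_gt0.
case: hB => [h|[s [us ss he]]]; last by left; exact: iso_path us ss he.
right; have hp : 0 < N * (N - 1) / 2 - 1.
  have : 6 <= N * (N - 1) by nra.
  lra.
by rewrite ler_pdivrMr //; lra.
Qed.

End Main.

Unset Implicit Arguments.

Theorem theorem4p8 (R : realType) (T : finType) (e : rel T) :
  is_tree e -> (3 <= #|T|)%N ->
  [/\ 2 / (#|T|.-1)%:R <= gamma R e,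
      gamma R e <= #|T|%:R / (2 * #|T| - 3)%:R,
      gamma R e = 2 / (#|T|.-1)%:R <-> graph_iso e (path_rel #|T|)
    & gamma R e = #|T|%:R / (2 * #|T| - 3)%:R <-> graph_iso e (star_rel #|T|)].
Proof.
move=> [[esym eirr] [econ eacy]] n3.
have [x3 [f3 g3]] := upper_gen R esym eirr eacy econ n3.
have LB : 2 / (#|T|.-1)%:R <= gamma R e.
  by apply: (gamma_ge f3) => x fx; case: (lower_tree esym eirr econ n3 fx).
have UB : gamma R e <= #|T|%:R / (2 * #|T| - 3)%:R.
  exact: le_trans (gamma_le e f3) g3.
have nR : (3 <= #|T|%:R :> R) by rewrite (ler_nat R 3).
split => //.
- split.
    move=> hg; apply: NNPP => np.
    have hc : #|T|%:R / (tri R #|T| - 1) <= gamma R e.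
      apply: (gamma_ge f3) => x fx.
      by case: (lower_tree esym eirr econ n3 fx) => _ [].
    move: hc; rewrite hg.
    have -> : (#|T|.-1)%:R = #|T|%:R - 1 :> R by rewrite -subn1 natrB //; lia.
    rewrite /tri; set N := #|T|%:R : R in nR *.
    have h1 : 0 < N * (N - 1) / 2 - 1.
      have : 6 <= N * (N - 1) by nra.
      lra.
    apply/negP; rewrite -ltNge -subr_gt0.
    have h2 : N * (N - 1) - 2 != 0 by apply/eqP => h; lra.
    have h3 : N - 1 != 0 by apply/eqP => h; lra.
    have h4 : N * (N - 1) / 2 - 1 != 0 by apply/eqP => h; lra.
    have -> : N / (N * (N - 1) / 2 - 1) - 2 / (N - 1) = 4 / ((N * (N - 1) - 2) * (N - 1)).
      by field; rewrite h3 h2.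
    rewrite divr_gt0 // mulr_gt0 //; lra.
  move=> iso; apply/le_anti/andP; split => //.
  have [x [fx gx]] := path_upper R (leq_trans (isT : (2 <= 3)%N) n3) iso.
  exact: le_trans (gamma_le e fx) gx.
- split.
    move=> hg; apply: NNPP => ns.
    have [a [b [q [up M]]]] := max_path econ n3.
    case: (leqP (size (b :: q)) 2) => sq.
      have [c hc] := star_center esym eirr econ up M n3 sq.
      apply: ns; apply: (iso_star (b := c)) => x y.
      case: (eqVneq x c) => [->|xc]; case: (eqVneq y c) => [->|yc] /=.
      + by rewrite eirr.
      + by rewrite hc.
      + by rewrite esym hc.
      + apply/negbTE; apply: (triangle_free esym eirr eacy (b := c)); exact: hc.
    case: q up M sq => [|d [|f q]] up M sq //.
    have [x [fx gx]] := upper_strict R esym eirr eacy n3 up M.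
    have := lt_le_trans (le_lt_trans (gamma_le e fx) gx) (lexx _).
    by rewrite hg ltxx.
  move=> iso; apply/le_anti/andP; split => //.
  apply: (gamma_ge f3) => x fx; exact: star_lower.
Qed.
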